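(* In the design described in the context, suppose the boundaries $l_{k,j}\le u_{k,j}$ ($l_{k,J_k}=u_{k,J_k}$) are chosen so that, under the global null hypothesis $H_G:\mu_0=\mu_1=\dots=\mu_K$, $$P\Big(\bigcap_{k=1}^K\bigcup_{j=1}^{J_k}\Big[\bigcap_{i=1}^{j-1}\{l_{k,i}\le Z_{k,i}\le u_{k,i}\}\cap\{Z_{k,j}<l_{k,j}\}\Big]\Big)=1-\alpha$$ (i.e. with probability $1-\alpha$ every arm's statistic path falls below its lower boundary before ever exceeding its upper boundary; empty intersections are the whole sample space). Then the family-wise error rate is controlled in the strong sense at level $\alpha$: for every configuration of means $(\mu_0,\dots,\mu_K)$, the probability of rejecting at least one true $H_{0k}$ is at most $\alpha$.
   Context: A trial compares $K$ experimental arms with one common control arm (arm $0$). Outcomes on arm $k\in\{0,\dots,K\}$ are independent $N(\mu_k,\sigma^2)$ with $\sigma^2$ known. The control is recruited over stages $1,\dots,J_0$, with an analysis at the end of each stage; $n_{0,j}$ denotes the cumulative number of control patients by the end of stage $j$ ($n_{0,0}=0$). Experimental arm $k$ is added at the end of control stage $s(k)\ge 0$ and has analyses $j=1,\dots,J_k$ (with $s(k)+J_k\le J_0$), its $j$-th analysis coinciding with the end of control stage $s(k)+j$; $n_{k,j}$ denotes the cumulative number of patients on arm $k$ by its $j$-th analysis. Only concurrent controls are used: the test statistic for arm $k$ at its $j$-th analysis is $$Z_{k,j}=\frac{n_{k,j}^{-1}\sum_{i=1}^{n_{k,j}}X_{k,i}-(n_{0,s(k)+j}-n_{0,s(k)})^{-1}\sum_{i=n_{0,s(k)}+1}^{n_{0,s(k)+j}}X_{0,i}}{\sigma\sqrt{n_{k,j}^{-1}+(n_{0,s(k)+j}-n_{0,s(k)})^{-1}}},$$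 where $X_{k,i}$ is the outcome of the $i$-th patient on arm $k$. The null hypotheses are $H_{0k}:\mu_k\le\mu_0$, $k=1,\dots,K$. At the $j$-th analysis of an arm $k$ still in the trial, if $Z_{k,j}>u_{k,j}$ then $H_{0k}$ is rejected and the whole trial stops; if $Z_{k,j}<l_{k,j}$ arm $k$ is dropped from all subsequent stages; otherwise arm $k$ (and the control) continue to the next stage. The trial also stops if all arms have been dropped. Strong control of the FWER at level $\alpha$ means that for every configuration of the means the probability of rejecting at least one true $H_{0k}$ is at most $\alpha$. *)

(* Defs.v *)
From HB Require Import structures.
From mathcomp Require Import all_boot all_order all_algebra.
From mathcomp Require Import all_classical all_reals all_analysis.
Import Order.TTheory GRing.Theory Num.Theory.
Local Open Scope classical_set_scope.
Local Open Scope ring_scope.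

(* Experimental arm k+1 of the paper is [Some k] with [k : 'I_K];
   the control (arm 0) is [None].  Patients are indexed from 0: patient i
   of the paper (1-based) is index i-1 here. *)
Record design (R : Type) := Design {
  K : nat;
  J0 : nat;                       (* number of control stages *)
  n0 : nat -> nat;                (* n_{0,j}: cumulative control sample size *)
  s : 'I_K -> nat;                (* s(k): control stage at whose end arm k is added *)
  J : 'I_K -> nat;                (* J_k: number of analyses of arm k *)
  nk : 'I_K -> nat -> nat;        (* n_{k,j}: cumulative size of arm k at its analysis j *)
  lb : 'I_K -> nat -> R;
  ub : 'I_K -> nat -> R
}.

Arguments K {R} d.
Arguments J0 {R} d.
Arguments n0 {R} d _.
Arguments s {R} d _.
Arguments J {R} d _.
Arguments nk {R} d _ _.
Arguments lb {R} d _ _.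
Arguments ub {R} d _ _.

Set Implicit Arguments. Unset Strict Implicit. Unset Printing Implicit Defensive.

Definition design_ok (R : realType) (D : design R) : Prop :=
  [/\ n0 D 0 = 0%N,
      (forall j, (j < J0 D)%N -> (n0 D j < n0 D j.+1)%N),
      (forall k, (1 <= J D k)%N /\ (s D k + J D k <= J0 D)%N) &
      (forall k j, (1 <= j <= J D k)%N -> (0 < nk D k j)%N)] /\
  [/\ (forall k j, (1 <= j < J D k)%N -> (nk D k j <= nk D k j.+1)%N),
      (forall k j, (1 <= j <= J D k)%N -> lb D k j <= ub D k j) &
      (forall k, lb D k (J D k) = ub D k (J D k))].

Section Trial.
Variables (R : realType) (D : design R) (sigma : R).

(* outcome data: x a i = outcome of the (i+1)-th patient of arm a *)
Definition data_t := option 'I_(K D) -> nat -> R.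

Definition ctrl_size (k : 'I_(K D)) (j : nat) : nat :=
  (n0 D (s D k + j) - n0 D (s D k))%N.

(* Z_{k,j}, using concurrent controls only *)
Definition Zstat (x : data_t) (k : 'I_(K D)) (j : nat) : R :=
  let nkj := nk D k j in
  let m := ctrl_size k j in
  ((nkj%:R)^-1 * (\sum_(i < nkj) x (Some k) i)
   - (m%:R)^-1 * (\sum_(n0 D (s D k) <= i < n0 D (s D k + j)) x None i))
  / (sigma * Num.sqrt ((nkj%:R)^-1 + (m%:R)^-1)).

Definition cont (x : data_t) (k : 'I_(K D)) (i : nat) : Prop :=
  lb D k i <= Zstat x k i <= ub D k i.

(* the trial has not stopped (by an efficacy rejection) at any analysis
   performed at the end of control stages 1..t *)
Fixpoint nostop (x : data_t) (t : nat) : Prop :=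
  match t with
  | 0 => True
  | t'.+1 => nostop x t' /\
      forall k : 'I_(K D), (s D k < t'.+1 <= s D k + J D k)%N ->
        (forall i, (1 <= i < t'.+1 - s D k)%N -> cont x k i) ->
        Zstat x k (t'.+1 - s D k) <= ub D k (t'.+1 - s D k)
  end.

(* arm k is still in the trial at its j-th analysis (end of control stage
   s(k)+j): the trial has not stopped before, and arm k was not dropped *)
Definition active (x : data_t) (k : 'I_(K D)) (j : nat) : Prop :=
  nostop x (s D k + j).-1 /\ forall i, (1 <= i < j)%N -> cont x k i.

Definition rejects (x : data_t) (k : 'I_(K D)) : Prop :=
  exists j, [/\ (1 <= j <= J D k)%N, active x k j & ub D k j < Zstat x k j].

Definition fwer_event (mu : option 'I_(K D) -> R) (x : data_t) : Prop :=
  exists k : 'I_(K D), mu (Some k) <= mu None /\ rejects x k.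

Definition all_futile (x : data_t) : Prop :=
  forall k : 'I_(K D), exists j, [/\ (1 <= j <= J D k)%N,
     (forall i, (1 <= i < j)%N -> cont x k i) & Zstat x k j < lb D k j].

End Trial.

Definition outcomes (R : realType) (D : design R) (T : Type)
  (mu : option 'I_(K D) -> R) (sigma : R)
  (E : option 'I_(K D) -> nat -> T -> R) (w : T) : data_t D :=
  fun a i => mu a + sigma * E a i w.

Definition mutually_independent d (T : measurableType d) (R : realType)
  (P : probability T R) (I : eqType) (X : I -> T -> R) : Prop :=
  forall (F : seq I) (B : I -> set R), uniq F -> (forall i, measurable (B i)) ->
    P (\bigcap_(i in [set i | i \in F]) (X i @^-1` B i)) =
    (\prod_(i <- F) P (X i @^-1` B i))%E.

Definition iid_std_normal d (T : measurableType d) (R : realType)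
  (P : probability T R) (I : eqType) (X : I -> T -> R) : Prop :=
  [/\ forall i, measurable_fun setT (X i),
      forall i (B : set R), measurable B -> P (X i @^-1` B) = normal_prob 0 1 B &
      mutually_independent P X].

(* Main.v *)
Require Import Defs.
From HB Require Import structures.
From mathcomp Require Import all_boot all_order all_algebra.
From mathcomp Require Import all_classical all_reals all_analysis.
Import Order.TTheory GRing.Theory Num.Theory.
Local Open Scope classical_set_scope.
Local Open Scope ring_scope.

Section MS.
Context d (T : measurableType d) (R : realType).

Lemma mS_and (A B : T -> Prop) : measurable [set w | A w] -> measurable [set w | B w] ->
  measurable [set w | A w /\ B w].
Proof. by move=> mA mB; exact: (measurableI _ _ mA mB). Qed.

Lemma mS_and3 (A B C : T -> Prop) : measurable [set w | A w] -> measurable [set w | B w] ->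
  measurable [set w | C w] -> measurable [set w | [/\ A w, B w & C w]].
Proof.
move=> mA mB mC.
have -> : [set w | [/\ A w, B w & C w]] = [set w | A w /\ B w] `&` [set w | C w].
  by apply/seteqP; split => w /=; [case | case=> -[]].
by apply: measurableI => //; exact: mS_and.
Qed.

Lemma mS_const (P : Prop) : measurable [set _ : T | P].
Proof.
case: (pselect P) => p.
  by have -> : [set _ : T | P] = setT by apply/seteqP; split.
by have -> : [set _ : T | P] = set0 by apply/seteqP; split.
Qed.

Lemma mS_imp (A B : T -> Prop) : measurable [set w | A w] -> measurable [set w | B w] ->
  measurable [set w | A w -> B w].
Proof.
move=> mA mB.
have -> : [set w | A w -> B w] = ~` [set w | A w] `|` [set w | B w].
  apply/seteqP; split => w /=.
    by case: (pselect (A w)) => a h; [right; exact: h | left].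
  by case=> [na a|b _] //; exfalso; exact: na.
by apply: measurableU => //; exact: measurableC.
Qed.

Lemma mS_all_nat (Q : nat -> T -> Prop) : (forall i, measurable [set w | Q i w]) ->
  measurable [set w | forall i, Q i w].
Proof.
move=> mQ.
have -> : [set w | forall i, Q i w] = \bigcap_i [set w | Q i w].
  by apply/seteqP; split => w /= h i; [move=> _; exact: h | exact: (h i I)].
exact: bigcapT_measurable.
Qed.

Lemma mS_ex_nat (Q : nat -> T -> Prop) : (forall i, measurable [set w | Q i w]) ->
  measurable [set w | exists i, Q i w].
Proof.
move=> mQ.
have -> : [set w | exists i, Q i w] = \bigcup_i [set w | Q i w].
  by apply/seteqP; split => w /= [i]; [exists i|move=> _ h; exists i].
exact: bigcupT_measurable.
Qed.

Lemma mS_all_fin (I : finType) (Q : I -> T -> Prop) : (forall i, measurable [set w | Q i w]) ->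
  measurable [set w | forall i, Q i w].
Proof.
move=> mQ.
have -> : [set w | forall i, Q i w] = \bigcap_(i in setT) [set w | Q i w].
  by apply/seteqP; split => w /= h i; [move=> _; exact: h | exact: h].
by apply: fin_bigcap_measurable.
Qed.

Lemma mS_ex_fin (I : finType) (Q : I -> T -> Prop) : (forall i, measurable [set w | Q i w]) ->
  measurable [set w | exists i, Q i w].
Proof.
move=> mQ.
have -> : [set w | exists i, Q i w] = \bigcup_(i in setT) [set w | Q i w].
  by apply/seteqP; split => w /= [i]; [exists i|move=> _ h; exists i].
by apply: fin_bigcup_measurable.
Qed.

Lemma mS_le (f g : T -> R) : measurable_fun setT f -> measurable_fun setT g ->
  measurable [set w | f w <= g w].
Proof.
move=> mf mg.
have mt : measurable [set true] by [].
have := measurable_realfun.measurable_fun_ler mf mg measurableT mt.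
rewrite setTI; congr (measurable _); apply/seteqP; split => w /=.
Qed.

Lemma mS_lt (f g : T -> R) : measurable_fun setT f -> measurable_fun setT g ->
  measurable [set w | f w < g w].
Proof.
move=> mf mg.
have mt : measurable [set true] by [].
have := measurable_realfun.measurable_fun_ltr mf mg measurableT mt.
rewrite setTI; congr (measurable _); apply/seteqP; split => w /=.
Qed.
End MS.

Lemma mZ (R : realType) (D : design R) (sigma : R) d (T : measurableType d)
  (mu : option 'I_(K D) -> R) (E : option 'I_(K D) -> nat -> T -> R) :
  (forall a i, measurable_fun setT (E a i)) ->
  forall k j, measurable_fun setT (fun w => Zstat sigma (outcomes mu sigma E w) k j).
Proof.
move=> mE k j; rewrite /Zstat /outcomes /=.
apply: measurable_realfun.measurable_funM; last exact: measurable_cst.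
apply: measurable_realfun.measurable_funB; apply: measurable_realfun.measurable_funM; try exact: measurable_cst;
  apply: measurable_sum => i; apply: measurable_realfun.measurable_funD; try exact: measurable_cst;
  apply: measurable_realfun.measurable_funM; try exact: measurable_cst; exact: mE.
Qed.

Lemma avg_ord (R : realType) (n : nat) (c : R) (y : 'I_n -> R) : (0 < n)%N ->
  (n%:R)^-1 * (\sum_(i < n) (c + y i)) = c + (n%:R)^-1 * (\sum_(i < n) (0 + y i)).
Proof.
move=> n0; rewrite big_split /= sumr_const card_ord mulrDr.
have -> : \sum_(i < n) (0 + y i) = \sum_(i < n) y i by apply: eq_bigr => i _; rewrite add0r.
by rewrite -[c *+ n]mulr_natl mulrA mulVf ?mul1r // pnatr_eq0 -lt0n.
Qed.

Lemma avg_nat (R : realType) (a b : nat) (c : R) (y : nat -> R) : (a < b)%N ->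
  ((b - a)%N%:R)^-1 * (\sum_(a <= i < b) (c + y i))
  = c + ((b - a)%N%:R)^-1 * (\sum_(a <= i < b) (0 + y i)).
Proof.
move=> ab; rewrite big_split /= sumr_const_nat mulrDr.
have -> : \sum_(a <= i < b) (0 + y i) = \sum_(a <= i < b) y i by apply: eq_bigr => i _; rewrite add0r.
by rewrite -[c *+ _]mulr_natl mulrA mulVf ?mul1r // pnatr_eq0 subn_eq0 -ltnNge.
Qed.

Lemma n0_mono (R : realType) (D : design R) : design_ok D ->
  forall a b, (a < b)%N -> (b <= J0 D)%N -> (n0 D a < n0 D b)%N.
Proof.
move=> [[_ inc _ _] _] a; elim=> [//|b IH] ab bJ.
have h := inc b bJ.
case: (ltngtP a b) => [lt|gt|eq].
- exact: ltn_trans (IH lt (ltnW bJ)) h.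
- by move: ab; rewrite ltnS leqNgt gt.
- by rewrite eq.
Qed.

Lemma Z_le (R : realType) (D : design R) (sigma : R) T
  (mu : option 'I_(K D) -> R) (E : option 'I_(K D) -> nat -> T -> R) w k j :
  design_ok D -> 0 < sigma -> mu (Some k) <= mu None -> (1 <= j <= J D k)%N ->
  Zstat sigma (outcomes mu sigma E w) k j <=
  Zstat sigma (outcomes (fun _ => 0) sigma E w) k j.
Proof.
move=> ok s0 mk jJ.
have nkp : (0 < nk D k j)%N by case: ok => -[_ _ _ h] _; exact: h.
have csp : (n0 D (s D k) < n0 D (s D k + j))%N.
  apply: (@n0_mono _ D ok).
    by rewrite -{1}(addn0 (s D k)) ltn_add2l; case/andP: jJ.
  case: ok => -[_ _ h _] _; case: (h k) => _ h2; apply: (leq_trans _ h2).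
  by rewrite leq_add2l; case/andP: jJ.
rewrite /Zstat /outcomes /ctrl_size /=. rewrite avg_ord // avg_nat //.
apply: ler_wpM2r.
  by rewrite invr_ge0; apply: mulr_ge0; [exact: ltW | exact: sqrtr_ge0].
by rewrite opprD addrACA -[leRHS]add0r lerD2r subr_le0.
Qed.

Lemma mS_andb d (T : measurableType d) (a b : T -> bool) :
  measurable [set w | a w] -> measurable [set w | b w] ->
  measurable [set w | a w && b w].
Proof.
move=> ma mb.
have -> : [set w | a w && b w] = [set w | a w] `&` [set w | b w].
  by apply/seteqP; split => w /=; [case/andP | case=> -> ->].
exact: measurableI.
Qed.

Section Meas.
Variables (R : realType) (D : design R) (sigma : R) (d : measure_display)
  (T : measurableType d) (E : option 'I_(K D) -> nat -> T -> R)
  (mE : forall a i, measurable_fun setT (E a i)) (mu : option 'I_(K D) -> R).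

Let x w := outcomes mu sigma E w.

Lemma m_cont k i : measurable [set w | cont sigma (x w) k i].
Proof.
rewrite /cont; apply: mS_andb.
  by apply: mS_le; [exact: measurable_cst | exact: mZ].
by apply: mS_le; [exact: mZ | exact: measurable_cst].
Qed.

Lemma m_nostop t : measurable [set w | nostop sigma (x w) t].
Proof.
elim: t => [|t IH] /=; first exact: mS_const.
apply: mS_and => //; apply: mS_all_fin => k.
apply: mS_imp; first exact: mS_const.
apply: mS_imp.
  apply: mS_all_nat => i; apply: mS_imp; first exact: mS_const.
  exact: m_cont.
by apply: mS_le; [exact: mZ | exact: measurable_cst].
Qed.

Lemma m_futile : measurable [set w | all_futile sigma (x w)].
Proof.
rewrite /all_futile; apply: mS_all_fin => k; apply: mS_ex_nat => j.
apply: mS_and3; first exact: mS_const.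
  apply: mS_all_nat => i; apply: mS_imp; first exact: mS_const.
  exact: m_cont.
by apply: mS_lt; [exact: mZ | exact: measurable_cst].
Qed.

Lemma m_fwer mu' : measurable [set w | fwer_event sigma mu' (x w)].
Proof.
rewrite /fwer_event; apply: mS_ex_fin => k; apply: mS_and; first exact: mS_const.
rewrite /rejects; apply: mS_ex_nat => j.
apply: mS_and3; first exact: mS_const.
  rewrite /active; apply: mS_and; first exact: m_nostop.
  apply: mS_all_nat => i; apply: mS_imp; first exact: mS_const.
  exact: m_cont.
by apply: mS_lt; [exact: measurable_cst | exact: mZ].
Qed.
End Meas.

Lemma pointwise (R : realType) (D : design R) (sigma : R) T
  (mu : option 'I_(K D) -> R) (E : option 'I_(K D) -> nat -> T -> R) w :
  design_ok D -> 0 < sigma ->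
  fwer_event sigma mu (outcomes mu sigma E w) ->
  ~ all_futile sigma (outcomes (fun _ => 0) sigma E w).
Proof.
move=> ok s0 [k [tn [j [/andP [j1 jJ] [_ act] rej]]]] H.
have [j' [/andP [j1' jJ'] c0 lt0]] := H k.
have Zle i : (1 <= i <= J D k)%N -> Zstat sigma (outcomes mu sigma E w) k i <=
    Zstat sigma (outcomes (fun _ => 0) sigma E w) k i.
  by move=> hi; exact: Z_le.
have lu i : (1 <= i <= J D k)%N -> lb D k i <= ub D k i.
  by move=> hi; case: ok => _ [_ h _]; exact: h.
case: (ltngtP j' j) => [lt|gt|eq].
- have /andP [l1 _] := act j' (introT andP (conj j1' lt)).
  have := Zle j' (introT andP (conj j1' jJ')).
  move=> h; have := le_trans l1 h; by rewrite leNgt lt0.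
- have /andP [_ u0] := c0 j (introT andP (conj j1 gt)).
  have := Zle j (introT andP (conj j1 jJ)).
  move=> h; have := lt_le_trans rej (le_trans h u0); by rewrite ltxx.
- subst j'.
  have := Zle j (introT andP (conj j1 jJ)) => h.
  have := lt_le_trans (lt_le_trans (le_lt_trans (lu j (introT andP (conj j1 jJ))) rej) h) (ltW lt0).
  by rewrite ltxx.
Qed.

Theorem corollary1 (R : realType) (D : design R) (sigma alpha : R)
  (d : measure_display) (T : measurableType d) (P : probability T R)
  (E : option 'I_(K D) -> nat -> T -> R) :
  design_ok D -> 0 < sigma ->
  iid_std_normal P (fun p : option 'I_(K D) * nat => E p.1 p.2) ->
  (* boundaries calibrated under the global null mu_0 = ... = mu_K *)
  (forall m : R,
     P [set w | all_futile sigma (outcomes (fun _ => m) sigma E w)]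
     = ((1 - alpha)%:E)) ->
  (* strong FWER control *)
  forall mu : option 'I_(K D) -> R,
    (P [set w | fwer_event sigma mu (outcomes mu sigma E w)] <= alpha%:E)%E.
Proof.
move=> ok s0 [mE _ _] H mu.
have mE' : forall a i, measurable_fun setT (E a i) by move=> a i; exact: (mE (a, i)).
have mA := @m_futile R D sigma d T E mE' (fun _ => 0).
have mF := @m_fwer R D sigma d T E mE' mu mu.
apply: (@le_trans _ _ (P (~` [set w | all_futile sigma (outcomes (fun _ => 0) sigma E w)]))).
  apply: le_measure; rewrite ?inE //; first exact: measurableC.
  by move=> w /= hw; exact: (@pointwise R D sigma T mu E w ok s0 hw).
rewrite probability_setC // H -EFinB lee_fin.
by rewrite opprB addrC subrK.
Qed.
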